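(* Assume the setting described in the context. Let $f\in\acute{\mathcal J}$ and $g\in\grave{\mathcal J}$ be weight invariants with weights $\widehat f,\widehat g$, and let $s$ be an integer with $0\le s\le\widehat f$, $0\le s\le\widehat g$. Then there is a nonzero real constant $c$ such that $\acute{\mathcal X}^s(f,g)^{(s)}=c\,fg$, and $\acute{\mathcal X}^k(f,g)^{(s)}=0$ for every integer $k>s$.
   Context: For a real square matrix $A_0$ put $\mathcal D_{A_0}f(\mathbf x)=f'(\mathbf x)A_0\mathbf x$. Let $(\acute X,\acute Y,\acute Z)$ and $(\grave X,\grave Y,\grave Z)$ be $\mathfrak{sl}_2$ triads ($[X,Y]=Z,[Z,X]=2X,[Z,Y]=-2Y$) of real $n\times n$ resp. $m\times m$ matrices, with independent variables $\mathbf x\in\mathbb R^n$, $\mathbf y\in\mathbb R^m$. On $\mathbb R[[\mathbf x]]$: $\acute{\mathcal X}=\mathcal D_{\acute Y},\acute{\mathcal Y}=\mathcal D_{\acute X},\acute{\mathcal Z}=\mathcal D_{\acute Z}$; on $\mathbb R[[\mathbf y]]$: $\grave{\mathcal X}=\mathcal D_{\grave Y},\grave{\mathcal Y}=\mathcal D_{\grave X},\grave{\mathcal Z}=\mathcal D_{\grave Z}$; these are extended to $\mathbb R[[\mathbf x,\mathbf y]]$ acting only on the $\mathbf x$ (resp. $\mathbf y$) variables. $\acute{\mathcal J}=\ker\acute{\mathcal X}$, $\grave{\mathcal J}=\ker\grave{\mathcal X}$. A weight invariant is $f\in\acute{\mathcal J}$ with $\acute{\mathcal Z}f=\widehat ff$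 (similarly in $\grave{\mathcal J}$). External transvectant: $(f,g)^{(s)}=\sum_{j=0}^s(-1)^j\binom sj\frac{(\widehat f-j)!}{(\widehat f-s)!}\frac{(\widehat g-s+j)!}{(\widehat g-s)!}(\acute{\mathcal Y}^jf)(\grave{\mathcal Y}^{s-j}g)$. *)

(* Defs.v *)
From HB Require Import structures.
From mathcomp Require Import all_boot all_order all_algebra.
From mathcomp Require Import reals.
Set Implicit Arguments. Unset Strict Implicit. Unset Printing Implicit Defensive.
Import Order.TTheory GRing.Theory Num.Theory.
Local Open Scope ring_scope.

Definition mono (n : nat) := {ffun 'I_n -> nat}.

(* a formal power series in R[[x_1..x_n]] = its coefficient function *)
Definition series (R : realType) (n : nat) := mono n -> R.

(* series in R[[x, y]], x in R^n, y in R^m: coefficient of x^a y^b *)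
Definition series2 (R : realType) (n m : nat) := mono n -> mono m -> R.

Definition mono_incr n (a : mono n) (i : 'I_n) : mono n :=
  [ffun k => (a k + (k == i))%N].
Definition mono_decr n (a : mono n) (i : 'I_n) : mono n :=
  [ffun k => (a k - (k == i))%N].

Definition pderiv (R : realType) n (i : 'I_n) (f : series R n) : series R n :=
  fun a => (a i).+1%:R * f (mono_incr a i).

Definition mulvar (R : realType) n (j : 'I_n) (f : series R n) : series R n :=
  fun a => if (0 < a j)%N then f (mono_decr a j) else 0.

(* D_A f (x) = f'(x) A x = sum_{i,j} A_{ij} x_j (d f / d x_i) *)
Definition DA (R : realType) n (A : 'M[R]_n) (f : series R n) : series R n :=
  fun a => \sum_(i < n) \sum_(j < n) A i j * mulvar j (pderiv i f) a.

Definition DA_x (R : realType) n m (A : 'M[R]_n) (F : series2 R n m)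
  : series2 R n m := fun a b => DA A (fun a' => F a' b) a.
Definition DA_y (R : realType) n m (A : 'M[R]_m) (F : series2 R n m)
  : series2 R n m := fun a b => DA A (fun b' => F a b') b.

Definition tens (R : realType) n m (f : series R n) (g : series R m)
  : series2 R n m := fun a b => f a * g b.

Definition sscale (R : realType) n m (c : R) (F : series2 R n m)
  : series2 R n m := fun a b => c * F a b.

Definition sl2_triad (R : realType) n (X Y Z : 'M[R]_n) : Prop :=
  [/\ X *m Y - Y *m X = Z, Z *m X - X *m Z = 2%:R *: X
    & Z *m Y - Y *m Z = - (2%:R *: Y)].

(* external transvectant (f,g)^(s), with acute Y = D_{acute X} on x and
   grave Y = D_{grave X} on y; fw, gw are the weights of f, g. *)
Definition transvectant (R : realType) n m (aX : 'M[R]_n) (gX : 'M[R]_m)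
  (f : series R n) (fw : nat) (g : series R m) (gw : nat) (s : nat)
  : series2 R n m :=
  fun a b => \sum_(j < s.+1)
    (-1) ^+ j * 'C(s, j)%:R
    * ((fw - j)`!%:R / (fw - s)`!%:R)
    * ((gw - s + j)`!%:R / (gw - s)`!%:R)
    * (iter j (DA aX) f a * iter (s - j) (DA gX) g b).

(* Main.v *)
Require Import Defs.
From HB Require Import structures.
From mathcomp Require Import all_boot all_order all_algebra.
From mathcomp Require Import reals.
From mathcomp Require Import ring zify.
From Stdlib Require Import FunctionalExtensionality.
Set Implicit Arguments. Unset Strict Implicit. Unset Printing Implicit Defensive.
Import Order.TTheory GRing.Theory Num.Theory.
Local Open Scope ring_scope.


Lemma incrC {n : nat} (a : mono n) (i : 'I_n) (k : 'I_n) : mono_incr (mono_incr a i) k = mono_incr (mono_incr a k) i.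
Proof. by apply/ffunP => x; rewrite !ffunE addnAC. Qed.
Lemma decrC {n : nat} (a : mono n) (i : 'I_n) (k : 'I_n) : mono_decr (mono_decr a i) k = mono_decr (mono_decr a k) i.
Proof. by apply/ffunP => x; rewrite !ffunE subnAC. Qed.
Lemma incrK {n : nat} (a : mono n) (i : 'I_n) : mono_decr (mono_incr a i) i = a.
Proof. by apply/ffunP => x; rewrite !ffunE addnK. Qed.
Lemma decrK {n : nat} (a : mono n) (i : 'I_n) : (0 < a i)%N -> mono_incr (mono_decr a i) i = a.
Proof. by move=> h; apply/ffunP => x; rewrite !ffunE; case: eqP => [->|] //=; rewrite subnK. Qed.
Lemma incr_ne {n : nat} (a : mono n) (i : 'I_n) (k : 'I_n) : i != k -> mono_incr a i k = a k.
Proof. by move=> h; rewrite ffunE eq_sym (negbTE h) addn0. Qed.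
Lemma decr_ne {n : nat} (a : mono n) (i : 'I_n) (k : 'I_n) : i != k -> mono_decr a i k = a k.
Proof. by move=> h; rewrite ffunE eq_sym (negbTE h) subn0. Qed.
Lemma incr_decr {n : nat} (a : mono n) (i : 'I_n) (l : 'I_n) : i != l ->
  mono_decr (mono_incr a i) l = mono_incr (mono_decr a l) i.
Proof.
move=> h; apply/ffunP => x; rewrite !ffunE.
case: (x =P i) => [e1|_]; case: (x =P l) => [e2|_] //=.
- by move: h; rewrite -e1 -e2 eqxx.
all: by rewrite ?subn0 ?addn0.
Qed.

Lemma pdC {R : realType} {n : nat} (i : 'I_n) (k : 'I_n) (F : series R n) : pderiv i (pderiv k F) = pderiv k (pderiv i F).
Proof.
apply: functional_extensionality => a; rewrite /pderiv.
case: (i =P k) => [->|/eqP ne] //.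
rewrite !incr_ne // 1?eq_sym // incrC.
by rewrite mulrCA.
Qed.

Lemma mvC {R : realType} {n : nat} (j : 'I_n) (l : 'I_n) (F : series R n) : mulvar j (mulvar l F) = mulvar l (mulvar j F).
Proof.
apply: functional_extensionality => a; rewrite /mulvar.
case: (j =P l) => [->|/eqP ne] //.
rewrite !decr_ne // 1?eq_sym // decrC.
by case: (0 < a j)%N; case: (0 < a l)%N.
Qed.

Lemma pd_mv {R : realType} {n : nat} (i : 'I_n) (l : 'I_n) (F : series R n) : pderiv i (mulvar l F) =
  fun a => mulvar l (pderiv i F) a + (i == l)%:R * F a.
Proof.
apply: functional_extensionality => a; rewrite /pderiv /mulvar.
case: (i =P l) => [<-|/eqP ne].
  rewrite ffunE eqxx addn1 /= incrK mul1r.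
  case: (posnP (a i)) => [h0|h].
    by rewrite h0 add0r mul1r.
  rewrite decrK // ffunE eqxx subn1 prednK //.
  by rewrite -[(a i).+1]addn1 natrD mulrDl mul1r.
rewrite incr_ne // mul0r addr0 incr_decr // decr_ne; last by rewrite eq_sym.
by case: (0 < a l)%N; rewrite ?mulr0.
Qed.

Lemma pd_sum {R : realType} {n : nat} (I : finType) (h : I -> series R n) (i : 'I_n) :
  pderiv i (fun b => \sum_k h k b) = fun b => \sum_k pderiv i (h k) b.
Proof. by apply: functional_extensionality => a; rewrite /pderiv mulr_sumr. Qed.
Lemma mv_sum {R : realType} {n : nat} (I : finType) (h : I -> series R n) (j : 'I_n) :
  mulvar j (fun b => \sum_k h k b) = fun b => \sum_k mulvar j (h k) b.
Proof.
apply: functional_extensionality => a; rewrite /mulvar.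
by case: ifP => // _; rewrite big1.
Qed.
Lemma pd_scale {R : realType} {n : nat} (c : R) (h : series R n) (i : 'I_n) : pderiv i (fun b => c * h b) = fun b => c * pderiv i h b.
Proof. by apply: functional_extensionality => a; rewrite /pderiv mulrCA. Qed.
Lemma mv_scale {R : realType} {n : nat} (c : R) (h : series R n) (j : 'I_n) : mulvar j (fun b => c * h b) = fun b => c * mulvar j h b.
Proof. by apply: functional_extensionality => a; rewrite /mulvar; case: ifP; rewrite ?mulr0. Qed.
Lemma mv_add {R : realType} {n : nat} (P Q : series R n) (j : 'I_n) : mulvar j (fun b => P b + Q b) = fun b => mulvar j P b + mulvar j Q b.
Proof. by apply: functional_extensionality => a; rewrite /mulvar; case: ifP; rewrite ?addr0. Qed.
Lemma pd_add {R : realType} {n : nat} (P Q : series R n) (i : 'I_n) : pderiv i (fun b => P b + Q b) = fun b => pderiv i P b + pderiv i Q b.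
Proof. by apply: functional_extensionality => a; rewrite /pderiv mulrDr. Qed.
Lemma DAE {R : realType} {n : nat} (A : 'M[R]_n) (F : series R n) (a : mono n) : DA A F a = \sum_i \sum_j A i j * mulvar j (pderiv i F) a.
Proof. by []. Qed.
Lemma E_DA {R : realType} {n : nat} (B : 'M[R]_n) (F : series R n) (i : 'I_n) (j : 'I_n) (a : mono n) :
  mulvar j (pderiv i (DA B F)) a =
  \sum_k \sum_l B k l * (mulvar j (mulvar l (pderiv i (pderiv k F))) a
                         + (i == l)%:R * mulvar j (pderiv k F) a).
Proof.
rewrite /DA pd_sum mv_sum; apply: eq_bigr => k _.
rewrite pd_sum mv_sum; apply: eq_bigr => l _.
by rewrite pd_scale mv_scale pd_mv mv_add mv_scale.
Qed.
Lemma swap3 {R : realType} {n : nat} (f : 'I_n -> 'I_n -> 'I_n -> R) :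
  \sum_i \sum_j \sum_k f i j k = \sum_k \sum_j \sum_i f i j k.
Proof.
rewrite exchange_big /=.
under eq_bigr => j _ do rewrite exchange_big /=.
by rewrite exchange_big.
Qed.
Lemma swap4 {R : realType} {n : nat} (f : 'I_n -> 'I_n -> 'I_n -> 'I_n -> R) :
  \sum_i \sum_j \sum_k \sum_l f i j k l = \sum_k \sum_l \sum_i \sum_j f i j k l.
Proof.
under eq_bigr => i _ do under eq_bigr => j _ do rewrite pair_big /=.
rewrite pair_big /=.
under [RHS]eq_bigr => k _ do under eq_bigr => l _ do rewrite pair_big /=.
rewrite [RHS]pair_big /=.
by rewrite exchange_big.
Qed.
Lemma collapse {R : realType} {n : nat} (i : 'I_n) (g : 'I_n -> R) : \sum_l (i == l)%:R * g l = g i.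
Proof.
rewrite (bigD1 i) //= eqxx mul1r big1 ?addr0 // => l.
by rewrite eq_sym => /negbTE ->; rewrite mul0r.
Qed.
Lemma expand {R : realType} {n : nat} (A B : 'M[R]_n) (W : 'I_n -> 'I_n -> 'I_n -> 'I_n -> R)
  (E : 'I_n -> 'I_n -> R) :
  \sum_i \sum_j A i j * \sum_k \sum_l B k l * (W i j k l + (i == l)%:R * E k j)
  = \sum_i \sum_j \sum_k \sum_l A i j * B k l * W i j k l
    + \sum_i \sum_j (B *m A) i j * E i j.
Proof.
have -> : \sum_i \sum_j A i j * \sum_k \sum_l B k l * (W i j k l + (i == l)%:R * E k j)
  = \sum_i \sum_j (\sum_k \sum_l A i j * B k l * W i j k l
    + \sum_k A i j * B k i * E k j).
  apply: eq_bigr => i _; apply: eq_bigr => j _.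
  rewrite big_distrr -big_split /=; apply: eq_bigr => k _.
  rewrite big_distrr /=.
  rewrite -[in RHS](collapse i (fun l => A i j * B k l * E k j)).
  rewrite -big_split /=; apply: eq_bigr => l _.
  ring.
under eq_bigr => i _ do rewrite big_split /=.
rewrite big_split /=; congr (_ + _).
rewrite swap3; apply: eq_bigr => k _; apply: eq_bigr => j _.
rewrite mxE big_distrl /=; apply: eq_bigr => i _; ring.
Qed.
Lemma DA_comm {R : realType} {n : nat} (A B : 'M[R]_n) (F : series R n) :
  DA A (DA B F) = fun a => DA B (DA A F) a + DA (B *m A - A *m B) F a.
Proof.
apply: functional_extensionality => a.
pose W := fun i j k l => mulvar j (mulvar l (pderiv i (pderiv k F))) a.
pose E := fun k j => mulvar j (pderiv k F) a.
have L1 : forall A B : 'M[R]_n, DA A (DA B F) a =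
   \sum_i \sum_j \sum_k \sum_l A i j * B k l * W i j k l
    + \sum_i \sum_j (B *m A) i j * E i j.
  move=> A' B'; rewrite DAE -(expand A' B' W E).
  by apply: eq_bigr => i _; apply: eq_bigr => j _; rewrite E_DA.
rewrite !L1.
have -> : \sum_i \sum_j \sum_k \sum_l B i j * A k l * W i j k l =
          \sum_i \sum_j \sum_k \sum_l A i j * B k l * W i j k l.
  rewrite swap4; do 4! (apply: eq_bigr => ? _).
  by rewrite [B _ _ * _]mulrC /W mvC pdC.
have -> : DA (B *m A - A *m B) F a =
  \sum_i \sum_j (B *m A) i j * E i j - \sum_i \sum_j (A *m B) i j * E i j.
  rewrite DAE -sumrB; apply: eq_bigr => i _; rewrite -sumrB; apply: eq_bigr => j _.
  by rewrite !mxE mulrBl.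
by rewrite -addrA [_ + (_ - _)]addrC subrK.
Qed.

Lemma DA_scale {R : realType} {n : nat} (M : 'M[R]_n) (c : R) (G : series R n) :
  DA M (fun b => c * G b) = fun b => c * DA M G b.
Proof.
apply: functional_extensionality => a; rewrite !DAE big_distrr.
apply: eq_bigr => i _; rewrite big_distrr; apply: eq_bigr => j _.
by rewrite pd_scale mv_scale mulrCA.
Qed.

Lemma DA_zero {R : realType} {n : nat} (M : 'M[R]_n) :
  DA M (fun _ => 0) = (fun _ => 0 : R).
Proof.
have -> : (fun _ : mono n => 0 : R) = fun b => 0 * (fun _ => 0 : R) b.
  by apply: functional_extensionality => b; rewrite mul0r.
by rewrite DA_scale; apply: functional_extensionality => b; rewrite !mul0r.
Qed.

Lemma DA_sum {R : realType} {n : nat} (M : 'M[R]_n) (N : nat) (c : 'I_N -> R)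
  (H : 'I_N -> series R n) :
  DA M (fun b => \sum_(j < N) c j * H j b) = fun b => \sum_(j < N) c j * DA M (H j) b.
Proof.
apply: functional_extensionality => a; rewrite DAE.
under eq_bigr => i _ do under eq_bigr => k _ do rewrite pd_sum mv_sum big_distrr.
under eq_bigr => i _ do rewrite exchange_big /=.
rewrite exchange_big /=.
apply: eq_bigr => j _; rewrite DAE big_distrr; apply: eq_bigr => i _.
rewrite big_distrr; apply: eq_bigr => k _ /=.
by rewrite pd_scale mv_scale mulrCA.
Qed.

Lemma DA_scalemx {R : realType} {n : nat} (M : 'M[R]_n) (c : R) (G : series R n) a :
  DA (c *: M) G a = c * DA M G a.
Proof.
rewrite !DAE big_distrr; apply: eq_bigr => i _; rewrite big_distrr.
by apply: eq_bigr => j _; rewrite mxE /= mulrA.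
Qed.

Lemma iter_DAx {R : realType} {n m : nat} (M : 'M[R]_n) (N k : nat) (c : 'I_N -> R)
  (Fj : 'I_N -> series R n) (Gj : 'I_N -> series R m) :
  iter k (DA_x (m:=m) M) (fun a b => \sum_(j < N) c j * (Fj j a * Gj j b)) =
  fun a b => \sum_(j < N) c j * (iter k (DA M) (Fj j) a * Gj j b).
Proof.
elim: k => [|k IH] //=; rewrite IH.
apply: functional_extensionality => a; apply: functional_extensionality => b.
rewrite /DA_x.
have -> : (fun a' => \sum_(j < N) c j * (iter k (DA M) (Fj j) a' * Gj j b)) =
    fun a' => \sum_(j < N) (c j * Gj j b) * iter k (DA M) (Fj j) a'.
  apply: functional_extensionality => a'; apply: eq_bigr => j _; ring.
rewrite DA_sum; apply: eq_bigr => j _; ring.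
Qed.

Lemma comm_XY {R : realType} {n : nat} (aX aY aZ : 'M[R]_n) :
  aX *m aY - aY *m aX = aZ -> forall F : series R n,
  DA aY (DA aX F) = fun a => DA aX (DA aY F) a + DA aZ F a.
Proof. by move=> h F; rewrite DA_comm h. Qed.

Lemma comm_ZY {R : realType} {n : nat} (aX aZ : 'M[R]_n) :
  aZ *m aX - aX *m aZ = 2%:R *: aX -> forall F : series R n,
  DA aZ (DA aX F) = fun a => DA aX (DA aZ F) a - 2%:R * DA aX F a.
Proof.
move=> h F; rewrite DA_comm -opprB h -scaleNr.
by apply: functional_extensionality => a; rewrite DA_scalemx mulNr.
Qed.

Lemma Zw {R : realType} {n : nat} (aX aZ : 'M[R]_n) (f : series R n) (fw : nat) :
  aZ *m aX - aX *m aZ = 2%:R *: aX ->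
  DA aZ f = (fun a => fw%:R * f a) ->
  forall j, DA aZ (iter j (DA aX) f) =
            fun a => (fw%:R - 2%:R * j%:R) * iter j (DA aX) f a.
Proof.
move=> hZY hZf; elim => [|j IH].
  by rewrite /= hZf; apply: functional_extensionality => a; rewrite mulr0 subr0.
rewrite iterS comm_ZY // IH DA_scale.
apply: functional_extensionality => a.
rewrite -[j.+1]addn1 natrD; ring.
Qed.

Lemma Xw {R : realType} {n : nat} (aX aY aZ : 'M[R]_n) (f : series R n) (fw : nat) :
  aX *m aY - aY *m aX = aZ ->
  aZ *m aX - aX *m aZ = 2%:R *: aX ->
  DA aY f = (fun _ => 0) ->
  DA aZ f = (fun a => fw%:R * f a) ->
  forall j, DA aY (iter j.+1 (DA aX) f) =
            fun a => (j.+1%:R * (fw%:R - j%:R)) * iter j (DA aX) f a.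
Proof.
move=> hXY hZY hYf hZf; elim => [|j IH].
  rewrite iterS /= (comm_XY hXY) hYf DA_zero hZf.
  by apply: functional_extensionality => a; rewrite add0r mul1r subr0.
rewrite iterS (comm_XY hXY) IH DA_scale (Zw hZY hZf).
apply: functional_extensionality => a.
rewrite -iterS -[j.+2]addn1 -[j.+1]addn1 !natrD; ring.
Qed.

Lemma iter_zero {R : realType} {n : nat} (M : 'M[R]_n) k :
  iter k (DA M) (fun _ => 0) = (fun _ => 0 : R).
Proof. by elim: k => //= k ->; rewrite DA_zero. Qed.

Lemma XA {R : realType} {n : nat} (aX aY aZ : 'M[R]_n) (f : series R n) (fw : nat) :
  aX *m aY - aY *m aX = aZ ->
  aZ *m aX - aX *m aZ = 2%:R *: aX ->
  DA aY f = (fun _ => 0) ->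
  DA aZ f = (fun a => fw%:R * f a) ->
  forall k j, (k <= j)%N -> (j <= fw)%N -> exists c : R, c != 0 /\
    iter k (DA aY) (iter j (DA aX) f) = fun a => c * iter (j - k) (DA aX) f a.
Proof.
move=> hXY hZY hYf hZf; elim => [|k IH] j hkj hj.
  exists 1; split; first exact: oner_neq0.
  by apply: functional_extensionality => a; rewrite subn0 mul1r.
have [c [hc e]] := IH j (ltnW hkj) hj.
have hjk : (j - k = (j - k.+1).+1)%N by lia.
rewrite iterS e DA_scale hjk (Xw hXY hZY hYf hZf).
exists (c * ((j - k.+1).+1%:R * (fw%:R - (j - k.+1)%:R))); split.
  have h : (j - k.+1 < fw)%N by lia.
  rewrite mulf_neq0 // mulf_neq0 // ?pnatr_eq0 //.
  by rewrite -natrB ?(ltnW h) // pnatr_eq0 subn_eq0 -ltnNge h.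
by apply: functional_extensionality => a; rewrite mulrA.
Qed.

Lemma XB {R : realType} {n : nat} (aX aY aZ : 'M[R]_n) (f : series R n) (fw : nat) :
  aX *m aY - aY *m aX = aZ ->
  aZ *m aX - aX *m aZ = 2%:R *: aX ->
  DA aY f = (fun _ => 0) ->
  DA aZ f = (fun a => fw%:R * f a) ->
  forall k j, (j < k)%N -> (j <= fw)%N ->
    iter k (DA aY) (iter j (DA aX) f) = fun _ => 0.
Proof.
move=> hXY hZY hYf hZf k j hjk hj.
have [c [_ e]] := XA hXY hZY hYf hZf (leqnn j) hj.
rewrite subnn /= in e.
have -> : k = ((k - j.+1) + 1 + j)%N by lia.
rewrite !iterD e /= DA_scale hYf.
have -> : (fun a : mono n => c * 0) = (fun _ => 0 : R).
  by apply: functional_extensionality => a; rewrite mulr0.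
exact: iter_zero.
Qed.

Unset Implicit Arguments.
Theorem lemma7p3 (R : realType) (n m : nat)
  (aX aY aZ : 'M[R]_n) (gX gY gZ : 'M[R]_m)
  (f : series R n) (g : series R m) (fw gw s : nat) :
  sl2_triad aX aY aZ -> sl2_triad gX gY gZ ->
  (* f in acute J = ker acute X = ker D_{acute Y}, weight fw *)
  DA aY f = (fun _ => 0) -> DA aZ f = (fun a => fw%:R * f a) ->
  (* g in grave J = ker grave X = ker D_{grave Y}, weight gw *)
  DA gY g = (fun _ => 0) -> DA gZ g = (fun b => gw%:R * g b) ->
  (s <= fw)%N -> (s <= gw)%N ->
  exists c : R, c != 0 /\
    iter s (DA_x aY) (transvectant aX gX f fw g gw s) = sscale c (tens f g) /\
    (forall k : nat, (s < k)%N ->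
       iter k (DA_x aY) (transvectant aX gX f fw g gw s) = (fun _ _ => 0)).
Proof.
move=> [hXY hZX _] _ hYf hZf _ _ hsf hsg.
pose cf := fun j : 'I_s.+1 => (-1) ^+ j * 'C(s, j)%:R
    * ((fw - j)`!%:R / (fw - s)`!%:R)
    * ((gw - s + j)`!%:R / (gw - s)`!%:R) : R.
have eT : transvectant aX gX f fw g gw s =
  fun a b => \sum_(j < s.+1) cf j * (iter j (DA aX) f a * iter (s - j) (DA gX) g b).
  by [].
have [cA [hcA eA]] := XA hXY hZX hYf hZf (leqnn s) hsf.
rewrite subnn /= in eA.
exists (cf ord_max * cA); split.
  rewrite mulf_neq0 // /cf /= binn subnK //.
  repeat apply: mulf_neq0;
    by rewrite ?signr_eq0 ?invr_eq0 ?oner_neq0 ?pnatr_eq0 -?lt0n ?fact_gt0.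
rewrite eT; split.
  rewrite (iter_DAx aY s cf (fun j => iter j (DA aX) f) (fun j => iter (s - j) (DA gX) g)).
  apply: functional_extensionality => a; apply: functional_extensionality => b.
  rewrite big_ord_recr /= big1 ?add0r.
    by rewrite eA subnn /sscale /tens /=; ring.
  move=> j _; rewrite (XB hXY hZX hYf hZf) ?mul0r ?mulr0 //=.
  by apply: leq_trans (ltnW (ltn_ord j)) hsf.
move=> k hk.
rewrite (iter_DAx aY k cf (fun j => iter j (DA aX) f) (fun j => iter (s - j) (DA gX) g)).
apply: functional_extensionality => a; apply: functional_extensionality => b.
rewrite big1 // => j _; rewrite (XB hXY hZX hYf hZf) ?mul0r ?mulr0 //.
  by apply: leq_ltn_trans hk; rewrite -ltnS.
by rewrite -ltnS; apply: leq_trans (ltn_ord j) _.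
Qed.
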